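(* Let $p$ be a prime, let $(R,u)$ be a $\mathbb{Z}_p$-algebra with a filtration $u:R\to\mathbb{Z}\cup\{\infty\}$, and let $\sigma$ be an automorphism of $R$ such that the skew derivation $(\sigma,\sigma-\mathrm{id})$ is compatible with $u$. Suppose $u(p)\geq1$ and $\deg_u(\sigma-\mathrm{id})\geq1$. Then $\deg_u(\sigma^{p^n}-\mathrm{id})\geq n$ for all $n\in\mathbb{N}$.
   Context: A filtration $u$ satisfies $u(0)=\infty$, $u(x+y)\geq\min\{u(x),u(y)\}$, $u(xy)\geq u(x)+u(y)$, and is separated ($u(x)=\infty\iff x=0$). For an additive map $d:R\to R$, $\deg_u(d)=\inf_{x\neq0}\{u(d(x))-u(x)\}$. A skew derivation $(\sigma,\delta)$ ($\sigma$ automorphism, $\delta(ab)=\delta(a)b+\sigma(a)\delta(b)$) is compatible with $u$ if $\deg_u(\sigma-\mathrm{id})>0$ and $\deg_u(\delta)>0$. *)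

(* Defs.v *)
From mathcomp Require Import all_boot all_order all_algebra.
From mathcomp Require Import all_classical all_reals.
From mathcomp Require Import ereal.
Set Implicit Arguments. Unset Strict Implicit. Unset Printing Implicit Defensive.
Import Order.TTheory GRing.Theory Num.Theory.
Local Open Scope ring_scope.
Local Open Scope ereal_scope.
Local Open Scope classical_set_scope.

(* Values in Z ∪ {∞} are modelled by \bar int (never -oo). *)

Definition filtration (R : pzRingType) (u : R -> \bar int) : Prop :=
  [/\ forall x, u x != -oo,
      u 0%R = +oo,
      forall x y, Order.min (u x) (u y) <= u (x + y)%R,
      forall x y, u x + u y <= u (x * y)%R
    & forall x, u x = +oo <-> x = 0%R].

(* embedding Z ∪ {±∞} into Q ∪ {±∞} (to take infima in a complete order) *)
Definition ext_int_to_rat (z : \bar int) : \bar rat :=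
  match z with
  | EFin r => EFin (r%:~R)
  | +oo => +oo
  | -oo => -oo
  end.

Definition deg_u (R : pzRingType) (u : R -> \bar int) (d : R -> R) : \bar rat :=
  ereal_inf [set ext_int_to_rat (u (d x)) - ext_int_to_rat (u x) | x in [set x : R | x != 0%R]].

Definition ring_automorphism (R : pzRingType) (s : R -> R) : Prop :=
  [/\ forall x y : R, s (x + y)%R = (s x + s y)%R,
      forall x y : R, s (x * y)%R = (s x * s y)%R,
      s 1%R = 1%R
    & bijective s].

Definition skew_derivation (R : pzRingType) (s d : R -> R) : Prop :=
  ring_automorphism s /\
  (forall x y : R, d (x + y)%R = (d x + d y)%R) /\
  (forall a b : R, d (a * b)%R = (d a * b + s a * d b)%R).

Definition compatible (R : pzRingType) (u : R -> \bar int) (s d : R -> R) : Prop :=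
  0 < deg_u u (fun x => s x - x)%R /\ 0 < deg_u u d.

(* Main.v *)
Require Import Defs.
From mathcomp Require Import all_boot all_order all_algebra.
From mathcomp Require Import all_classical all_reals.
From mathcomp Require Import ereal.
From mathcomp Require Import zify.
Import Order.TTheory GRing.Theory Num.Theory.
Local Open Scope ring_scope.
Local Open Scope ereal_scope.


Lemma sup_ub_int (A : set (\bar rat)) :
  (forall y, A y -> y = -oo \/ exists k : int, y = (k%:~R)%:E) ->
  forall y, A y -> y <= ereal_sup A.
Proof.
move=> hA y Ay.
suff hs : exists s, supremums A s.
  rewrite /ereal_sup /supremum ifF; last by apply/eqP => A0; rewrite A0 in Ay.
  by case: (xgetPex -oo hs) => ub _; exact: ub.
case: (pselect (exists b : rat, ubound A b%:E)) => [[b hb]|nob].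
  case: (pselect (exists k : int, A (k%:~R)%:E)) => [[k0 hk0]|noI].
    pose P := fun m : nat => `[< A ((k0 + m%:Z)%:~R)%:E >].
    have exP : exists m, P m by exists 0%N; apply/asboolP; rewrite addr0.
    have bnd : forall m, P m -> (m <= `|Num.ceil b - k0|%N)%N.
      move=> m /asboolP Pm; have := hb _ Pm; rewrite lee_fin => h.
      have h2 : ((k0 + m%:Z)%:~R <= (Num.ceil b)%:~R :> rat)%R.
        apply: le_trans h _; exact: real_ceil_ge (num_real b).
      rewrite ler_int in h2; lia.
    case: (ex_maxnP exP bnd) => m /asboolP Pm maxm.
    exists ((k0 + m%:Z)%:~R)%:E; split; last by move=> z; apply.
    move=> z Az; case: (hA z Az) => [->|[k kz]]; first exact: leNye.
    rewrite kz in Az *.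
    rewrite lee_fin ler_int; case: (lerP k (k0 + m%:Z)) => // hk.
    have hk' : k = (k0 + (`|(k - k0)%R|%N)%:Z)%R by lia.
    have := maxm `|(k - k0)%R|%N; rewrite /P -hk' => /(_ (asboolT Az)) => h; lia.
  exists -oo; split; last by move=> z _; exact: leNye.
  move=> z Az; case: (hA z Az) => [->|[k kz]] //.
  by exfalso; apply: noI; exists k; rewrite -kz.
exists +oo; split; first by move=> z _; exact: leey.
move=> z ubz; case: z ubz => [r|//|] ubz.
  by exfalso; apply: nob; exists r.
exfalso; apply: nob; exists 0%R => z Az.
by have := ubz z Az; rewrite leeNy_eq => /eqP ->; exact: leNye.
Qed.

Lemma inf_lb_int (A : set (\bar rat)) :
  (forall y, A y -> y = +oo \/ exists k : int, y = (k%:~R)%:E) ->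
  forall y, A y -> ereal_inf A <= y.
Proof.
move=> hA y Ay; rewrite /ereal_inf leeNl; apply: sup_ub_int; last by exists y.
move=> _ [z Az <-]; case: (hA z Az) => [->|[k ->]]; first by left.
by right; exists (- k)%R; rewrite intrN EFinN.
Qed.

Lemma zz (V : zmodType) (a b x y m : V) : (a - x - (m + (b - x)) = y - x - m + (a - b - (y - x)))%R.
Proof.
have -> : (y - x - m + (a - b - (y - x)) = a - b - m)%R.
  by rewrite addrC -addrA addKr.
by rewrite opprD opprB addrC -addrA [((x - b) + _)%R]addrC subrKA addrC.
Qed.

Section Aux.
Variables (R : pzRingType) (u : R -> \bar int).
Hypothesis hu : filtration u.

Definition geb (f : R -> R) (c : int) :=
  forall x (r : int), r%:E <= u x -> (r + c)%:E <= u (f x).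

Lemma u0 r : r%:E <= u 0%R.
Proof. by case: hu => _ -> _ _ _; rewrite leey. Qed.

Lemma uadd a b r : r%:E <= u a -> r%:E <= u b -> r%:E <= u (a + b)%R.
Proof.
case: hu => _ _ hm _ _ ha hb; apply: le_trans (hm a b).
by rewrite le_min ha hb.
Qed.

Lemma umuln a r j : r%:E <= u a -> r%:E <= u (a *+ j)%R.
Proof.
move=> ha; elim: j => [|j IH]; first by rewrite mulr0n u0.
by rewrite mulrS uadd.
Qed.

Lemma umulp (p : nat) a r : 1%:E <= u p%:R -> r%:E <= u a ->
  (r + 1)%:E <= u (p%:R * a)%R.
Proof.
case: hu => _ _ _ hm _ hp ha; apply: le_trans (hm _ _).
by rewrite addrC EFinD leeD.
Qed.

Lemma additive0 (f : R -> R) : (forall x y, f (x + y)%R = (f x + f y)%R) -> f 0%R = 0%R.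
Proof.
move=> fD; have h := fD 0%R 0%R; rewrite addr0 in h.
by apply: (addrI (f 0%R)); rewrite addr0 -h.
Qed.

Lemma additiveB (f : R -> R) : (forall x y, f (x + y)%R = (f x + f y)%R) ->
  forall x y, f (x - y)%R = (f x - f y)%R.
Proof.
move=> fD x y; have := fD (x - y)%R y; rewrite subrK => ->.
by rewrite addrK.
Qed.

Lemma step (p : nat) (S : R -> R) (c : int) :
  (forall x y, S (x + y)%R = (S x + S y)%R) ->
  1%:E <= u p%:R -> (1 <= c)%R ->
  geb (fun x => S x - x)%R c -> geb (fun x => iter p S x - x)%R (c + 1).
Proof.
move=> SD hp c1 hS x r hx.
set t := (S x - x)%R.
have ht : (r + c)%:E <= u t by exact: hS.
have key : forall j, (r + c + c)%:E <= u ((iter j S x - x) - t *+ j)%R.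
  elim=> [|j IH]; first by rewrite /= subrr mulr0n subr0 u0.
  set y := iter j S x.
  have hyx : (r + c)%:E <= u (y - x)%R.
    have -> : (y - x = (y - x - t *+ j) + t *+ j)%R by rewrite subrK.
    apply: uadd; last exact: umuln.
    apply: le_trans IH; rewrite lee_fin; lia.
  have hT := hS _ _ hyx.
  have -> : ((iter j.+1 S x - x) - t *+ j.+1 =
            (y - x - t *+ j) + (S (y - x) - (y - x)))%R.
    rewrite (additiveB _ SD) /= -/y /t mulrSr.
    exact: zz.
  exact: uadd.
have := key p; set E := (_ - _)%R => hE.
have -> : (iter p S x - x = p%:R * t + E)%R by rewrite mulr_natl /E [RHS]addrC subrK.
apply: uadd.
  by rewrite addrA; exact: umulp.
apply: le_trans hE; rewrite lee_fin; lia.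
Qed.

Lemma iter_add (f : R -> R) k : (forall x y, f (x + y)%R = (f x + f y)%R) ->
  forall x y, iter k f (x + y)%R = (iter k f x + iter k f y)%R.
Proof. by move=> fD x y; elim: k => [|k IH] //=; rewrite IH fD. Qed.

Lemma unfin {x : R} : x != 0%R -> exists t : int, u x = t%:E.
Proof.
case: hu => hn _ _ _ hs xn0; case ux: (u x) => [t| |]; first by exists t.
  by move/hs: ux => x0; rewrite x0 eqxx in xn0.
by have := hn x; rewrite ux.
Qed.

Lemma deg_in (d : R -> R) : d 0%R = 0%R -> 1%:E <= deg_u u d -> geb d 1.
Proof.
move=> d0 hdeg x r hx; case: (eqVneq x 0%R) => [->|xn0]; first by rewrite d0 u0.
have h : deg_u u d <= ext_int_to_rat (u (d x)) - ext_int_to_rat (u x).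
  rewrite /deg_u; apply: inf_lb_int; last by exists x.
  move=> _ [z /= zn0 <-]; case: (unfin zn0) => t ut; rewrite ut /=.
  case hdz : (u (d z)) => [w| |] /=.
  - by right; exists (w - t)%R; rewrite intrB EFinB.
  - by left.
  - by case: hu => hn _ _ _ _; have := hn (d z); rewrite hdz.
have := le_trans hdeg h; case: (unfin xn0) => t ut; rewrite ut in hx *.
case: (u (d x)) => [w| |] /=; last by [].
  rewrite -EFinB !lee_fin => h1; rewrite lee_fin in hx.
  have : ((t + 1)%:~R <= w%:~R :> rat)%R.
    by rewrite intrD addrC -lerBrDr.
  rewrite ler_int; lia.
by move=> _; rewrite leey.
Qed.

Lemma deg_out (d : R -> R) (c : int) : geb d c -> (c%:~R)%:E <= deg_u u d.
Proof.
move=> hd; rewrite /deg_u; apply: le_ereal_inf_tmp => _ [x /= xn0 <-].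
case: (unfin xn0) => t ut; have := hd x t; rewrite ut lexx => /(_ isT).
case: (u (d x)) => [w| |] /=; last by [].
  rewrite -EFinB !lee_fin => h1.
  by rewrite lerBrDr -intrD ler_int addrC.
by move=> _; rewrite addye ?leey.
Qed.

End Aux.

Theorem lemma1p2p5 (p : nat) (R : pzRingType) (u : R -> \bar int) (s : R -> R) :
  prime p ->
  filtration u ->
  ring_automorphism s ->
  skew_derivation s (fun x => s x - x)%R ->
  compatible u s (fun x => s x - x)%R ->
  1%:E <= u (p%:R)%R ->
  1%:E <= deg_u u (fun x => s x - x)%R ->
  forall n : nat, (n%:R)%:E <= deg_u u (fun x => iter (p ^ n) s x - x)%R.
Proof.
move=> pp hu sa _ _ hp hdeg n.
case: sa => sD _ _ _.
have Q : forall n, @geb R u (fun x => iter (p ^ n) s x - x)%R (Posz n.+1).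
  elim=> [|k IH].
    by apply: (deg_in _ _ hu) => //=; rewrite (additive0 _ _ sD) subrr.
  move=> x r hx.
  have h := step _ _ hu _ _ _ (iter_add _ _ (p ^ k) sD) hp _ IH x r hx.
  have -> : Posz k.+2 = (Posz k.+1 + 1)%R by rewrite -PoszD addn1.
  rewrite expnS iterM.
  apply: h; lia.
apply: le_trans (deg_out _ _ hu _ _ (Q n)).
by rewrite lee_fin ler_nat.
Qed.
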